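(* For positive integers $m\le n$, the complete bipartite graph $K_{m,n}$ satisfies $IDI(K_{m,n})=n$ if $m<n$, and $IDI(K_{m,n})=n+1$ if $m=n$.
   Context: For a finite simple connected graph $G=(V,E)$ with diameter $d$, a rank assignment is a function $f:V\to\mathbb{R}$; under $f$, the string of a vertex $v$ is the $d$-vector whose $i$-th coordinate is the sum of $f(w)$ over all vertices $w$ with $d(v,w)=i$. The ID-index $IDI(G)$ is the minimum $k$ such that there exists $f:V\to\mathbb{R}$ with $|f(V)|=k$ under which all vertices have distinct strings. *)

(* Defs.v *)
From HB Require Import structures.
From mathcomp Require Import all_boot all_order all_algebra.
From Stdlib Require Import Rdefinitions.
From mathcomp Require Import Rstruct.
Set Implicit Arguments. Unset Strict Implicit. Unset Printing Implicit Defensive.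
Import Order.TTheory GRing.Theory Num.Theory.

(* A finite simple graph: vertex finType T with symmetric irreflexive e : rel T. *)

Local Open Scope ring_scope.
Section Graph.
Variables (T : finType) (e : rel T).

Fixpoint ball (k : nat) (x : T) : {set T} :=
  match k with
  | 0 => [set x]
  | k'.+1 => ball k' x :|: [set y | [exists z in ball k' x, e z y]]
  end.

(* graph distance: the least k with y in ball k x (for connected graphs
   this is < #|T|; default #|T| if unreachable) *)
Definition gdist (x y : T) : nat := find (fun k => y \in ball k x) (iota 0 #|T|).

Definition diameter : nat := \max_(x : T) \max_(y : T) gdist x y.

Definition vstring (f : T -> R) (v : T) : seq R :=
  [seq \sum_(w : T | gdist v w == i) f w | i <- iota 1 diameter].

Definition num_values (f : T -> R) : nat := size (undup [seq f v | v <- enum T]).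

Definition distinguishing (f : T -> R) : Prop := injective (vstring f).

Definition is_IDI (k : nat) : Prop :=
  (exists f : T -> R, distinguishing f /\ num_values f = k) /\
  (forall f : T -> R, distinguishing f -> leq k (num_values f)).
End Graph.

Definition Kmn_rel (m n : nat) : rel ('I_m + 'I_n)%type :=
  fun x y => match x, y with
             | inl _, inr _ | inr _, inl _ => true
             | _, _ => false
             end.

(* Main.v *)
Require Import Defs.
From HB Require Import structures.
From mathcomp Require Import all_boot all_order all_algebra.
From Stdlib Require Import Rdefinitions.
From mathcomp Require Import Rstruct.
From mathcomp Require Import zify.
Set Implicit Arguments. Unset Strict Implicit. Unset Printing Implicit Defensive.
Import Order.TTheory GRing.Theory Num.Theory.

Lemma tri k : 2 * (\sum_(i < k) i.+1) = k * k.+1.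
Proof.
elim: k => [|k IH]; first by rewrite big_ord0.
rewrite big_ord_recr /= mulnDr IH; lia.
Qed.

Lemma sumc k c : \sum_(i < k) (i.+1 + c) = \sum_(i < k) i.+1 + k * c.
Proof. by rewrite big_split /= sum_nat_const card_ord. Qed.

Section K.
Variables (m n : nat) (hm : (0 < m)%nat) (hn : (0 < n)%nat).
Local Notation T := ('I_m + 'I_n)%type.
Local Notation e := (@Kmn_rel m n).

Definition kd (x y : T) : nat := if x == y then 0 else if e x y then 1 else 2.

Lemma ballS k x y : (y \in ball e k.+1 x) = (y \in ball e k x) || [exists z in ball e k x, e z y].
Proof. by rewrite /= !inE. Qed.

Lemma ball0 x y : (y \in ball e 0 x) = (y == x).
Proof. by rewrite /= inE. Qed.

Lemma ball1 x y : (y \in ball e 1 x) = (y == x) || e x y.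
Proof.
rewrite ballS ball0; congr (_ || _); apply/existsP/idP.
  by case=> z /andP[]; rewrite ball0 => /eqP ->.
by move=> h; exists x; rewrite ball0 eqxx.
Qed.

Lemma ball2 x y : y \in ball e 2 x.
Proof.
rewrite ballS ball1; apply/orP.
case: x => [a|a]; case: y => [b|b]; try by left; apply/orP; right.
  right; apply/existsP; exists (inr (Ordinal hn)); by rewrite ball1.
right; apply/existsP; exists (inl (Ordinal hm)); by rewrite ball1.
Qed.

Lemma cardT : #|{: T}| = (m + n)%nat.
Proof. by rewrite card_sum !card_ord. Qed.

Lemma gdistE x y : gdist e x y = kd x y.
Proof.
rewrite /gdist /kd card_sum !card_ord.
have H0 : (y \in ball e 0 x) = (x == y) by rewrite ball0 eq_sym.
have H1 : (y \in ball e 1 x) = (x == y) || e x y by rewrite ball1 eq_sym.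
case: eqP => [<-|nxy].
  have -> : (m + n = (m + n).-1.+1)%nat by lia.
  by rewrite /= ball0 eqxx.
case exy: (e x y).
  have -> : (m + n = (m + n - 2).+2)%nat by lia.
  by rewrite /= H0 H1 exy; move/eqP: nxy => /negbTE ->.
have -> : (m + n = (m + n - 3).+3)%nat.
  move: exy nxy; clear H0 H1; case: x => [a|a]; case: y => [b|b] //= _ nab.
    have : (nat_of_ord a <> nat_of_ord b) by move=> h; apply: nab; congr inl; exact: val_inj.
    have := ltn_ord a; have := ltn_ord b; lia.
  have : (nat_of_ord a <> nat_of_ord b) by move=> h; apply: nab; congr inr; exact: val_inj.
  have := ltn_ord a; have := ltn_ord b; lia.
by rewrite /= H0 H1 exy ball2; move/eqP: nxy => /negbTE ->.
Qed.


Local Open Scope ring_scope.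
Implicit Types (f : T -> R).

Definition SL f := \sum_(k < m) f (inl k).
Definition SR f := \sum_(k < n) f (inr k).
Definition gs f v i := \sum_(w | gdist e v w == i) f w.

Lemma kd_le2 x y : leq (kd x y) 2.
Proof. by rewrite /kd; case: (x == y) => //; case: (e x y). Qed.

Lemma gs3 f v i : leq 3 i -> gs f v i = 0.
Proof.
move=> hi; rewrite /gs big_pred0 // => w; rewrite gdistE.
have := kd_le2 v w; apply: contraTF => /eqP ->; by rewrite -ltnNge.
Qed.

Lemma gsL1 f a : gs f (inl a) 1 = SR f.
Proof.
rewrite /gs (eq_bigl (fun w => kd (inl a) w == 1%nat)); last by move=> w; rewrite gdistE.
rewrite big_sumType /= big_pred0; last by move=> k; rewrite /kd /=; case: ifP.
by rewrite add0r /SR; apply: eq_bigl => k; rewrite /kd.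
Qed.

Lemma gsR1 f a : gs f (inr a) 1 = SL f.
Proof.
rewrite /gs (eq_bigl (fun w => kd (inr a) w == 1%nat)); last by move=> w; rewrite gdistE.
rewrite big_sumType /= [X in _ + X]big_pred0; last by move=> k; rewrite /kd /=; case: ifP.
by rewrite addr0 /SL; apply: eq_bigl => k; rewrite /kd.
Qed.

Lemma gsL2 f a : gs f (inl a) 2 = SL f - f (inl a).
Proof.
rewrite /gs (eq_bigl (fun w => kd (inl a) w == 2%nat)); last by move=> w; rewrite gdistE.
rewrite big_sumType /= [X in _ + X]big_pred0; last by move=> k; rewrite /kd /=.
rewrite addr0 /SL [in RHS](bigD1 a) //= addrAC subrr add0r.
apply: eq_bigl => k; rewrite /kd /=.
have -> : (inl a == inl k :> T) = (a == k) by apply/eqP/eqP => [[]|->].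
by case: (a =P k) => [->|/eqP h]; rewrite ?eqxx // eq_sym.
Qed.

Lemma gsR2 f a : gs f (inr a) 2 = SR f - f (inr a).
Proof.
rewrite /gs (eq_bigl (fun w => kd (inr a) w == 2%nat)); last by move=> w; rewrite gdistE.
rewrite big_sumType /= big_pred0; last by move=> k; rewrite /kd /=.
rewrite add0r /SR [in RHS](bigD1 a) //= addrAC subrr add0r.
apply: eq_bigl => k; rewrite /kd /=.
have -> : (inr a == inr k :> T) = (a == k) by apply/eqP/eqP => [[]|->].
by case: (a =P k) => [->|/eqP h]; rewrite ?eqxx // eq_sym.
Qed.

Lemma vstringE f v : vstring e f v = [seq gs f v i | i <- iota 1 (diameter e)].
Proof. by []. Qed.

Lemma vstring_eq f x y : (forall i, leq 1 i -> gs f x i = gs f y i) ->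
  vstring e f x = vstring e f y.
Proof.
move=> h; rewrite !vstringE; apply/eq_in_map => i; rewrite mem_iota => /andP[hi _].
exact: h.
Qed.

Lemma vstring_nth f v i : leq 1 i && leq i (diameter e) -> nth 0 (vstring e f v) i.-1 = gs f v i.
Proof.
move=> /andP[h0 h1]; rewrite vstringE (nth_map 0%nat); last by rewrite size_iota; lia.
by rewrite nth_iota; [congr gs; lia | lia].
Qed.

Lemma diam_ge x y : leq (gdist e x y) (diameter e).
Proof.
rewrite /diameter; apply: (leq_trans _ (leq_bigmax x)) => /=.
exact: (leq_bigmax y).
Qed.

Lemma diam1 : leq 1 (diameter e).
Proof.
have := diam_ge (inl (Ordinal hm)) (inr (Ordinal hn)); by rewrite gdistE /kd.
Qed.

Lemma diam2L : leq 2 m -> leq 2 (diameter e).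
Proof.
move=> h; have := diam_ge (inl (Ordinal hm)) (inl (Ordinal h)); by rewrite gdistE /kd.
Qed.

Lemma diam2R : leq 2 n -> leq 2 (diameter e).
Proof.
move=> h; have := diam_ge (inr (Ordinal hn)) (inr (Ordinal h)); by rewrite gdistE /kd.
Qed.


Lemma inj_R f : distinguishing e f -> injective (fun j => f (inr j)).
Proof.
move=> hd j j' hf; have : inr j = inr j' :> T.
  apply: hd; apply: vstring_eq => i hi.
  case: (ltngtP i 2) => [hi2|hi2|->]; last by rewrite !gsR2 hf.
    have -> : i = 1%nat by lia.
    by rewrite !gsR1.
  by rewrite !gs3.
by case.
Qed.

Lemma inj_L f : distinguishing e f -> injective (fun j => f (inl j)).
Proof.
move=> hd j j' hf; have : inl j = inl j' :> T.
  apply: hd; apply: vstring_eq => i hi.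
  case: (ltngtP i 2) => [hi2|hi2|->]; last by rewrite !gsL2 hf.
    have -> : i = 1%nat by lia.
    by rewrite !gsL1.
  by rewrite !gs3.
by case.
Qed.

Lemma num_geR f : injective (fun j => f (inr j)) -> leq n (num_values f).
Proof.
move=> hi; rewrite /num_values.
rewrite -[n in leq n _](size_enum_ord n) -(size_map (fun j => f (inr j))).
apply: uniq_leq_size.
  by rewrite (map_inj_uniq hi) enum_uniq.
move=> x /mapP[j _ ->]; rewrite mem_undup; apply: map_f; by rewrite mem_enum.
Qed.

Lemma lower_eq f : m = n -> distinguishing e f -> leq n.+1 (num_values f).
Proof.
move=> mn hd; rewrite ltnNge; apply/negP; rewrite /num_values.
set U := undup _ => hle.
set sL := [seq f (inl j) | j <- enum 'I_m].
set sR := [seq f (inr j) | j <- enum 'I_n].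
have uL : uniq sL by rewrite (map_inj_uniq (inj_L hd)) enum_uniq.
have uR : uniq sR by rewrite (map_inj_uniq (inj_R hd)) enum_uniq.
have subL : {subset sL <= U}.
  move=> x /mapP[j _ ->]; rewrite mem_undup; apply: map_f; by rewrite mem_enum.
have subR : {subset sR <= U}.
  move=> x /mapP[j _ ->]; rewrite mem_undup; apply: map_f; by rewrite mem_enum.
have szL : leq (size U) (size sL) by rewrite size_map size_enum_ord mn.
have szR : leq (size U) (size sR) by rewrite size_map size_enum_ord.
have [_ eL] := uniq_min_size uL subL szL.
have [_ eR] := uniq_min_size uR subR szR.
have pLR : perm_eq sL sR by apply: uniq_perm => // x; rewrite eL eR.
have SLE : SL f = \sum_(x <- sL) x by rewrite big_map big_enum.
have SRE : SR f = \sum_(x <- sR) x by rewrite big_map big_enum.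
have SLR : SL f = SR f by rewrite SLE SRE (perm_big _ pLR).
have a : 'I_m := Ordinal hm.
have : f (inl a) \in sR by rewrite eR -eL; apply: map_f; rewrite mem_enum.
case/mapP => j _ hj.
have : inl a = inr j :> T.
  apply: hd; apply: vstring_eq => i hi.
  case: (ltngtP i 2) => [hi2|hi2|->]; last by rewrite gsL2 gsR2 hj SLR.
    have -> : i = 1%nat by lia.
    by rewrite gsL1 gsR1 SLR.
  by rewrite !gs3.
by [].
Qed.

Hypothesis hmn : leq m n.

Definition h0 (v : T) : nat := match v with inl i => i.+1 | inr j => j.+1 + (m == n) end.
Definition f0 (v : T) : R := (h0 v)%:R.

Lemma natr_injR : injective (fun k : nat => (k%:R : R)).
Proof. by move=> a b /eqP; rewrite eqr_nat => /eqP. Qed.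

Lemma num_f0 : num_values f0 = (n + (m == n))%nat.
Proof.
have mc : forall s, [seq f0 v | v <- s] = map (fun k : nat => (k%:R : R)) (map h0 s) by move=> s; rewrite -map_comp.
rewrite /num_values mc (undup_map_inj natr_injR) size_map.
have -> : (n + (m == n) = size (iota 1 (n + (m == n))))%nat by rewrite size_iota.
apply: perm_size; apply: uniq_perm; [exact: undup_uniq | exact: iota_uniq |].
move=> x; rewrite mem_undup mem_iota; apply/mapP/idP.
  case=> v _ ->; case: v => [a|a] /=; have := ltn_ord a; case: (m == n) => /=; lia.
move=> hx; case: (leqP (m == n) x.-1) => hc.
  have hj : (x.-1 - (m == n) < n)%nat by move: hx hc; case: (m == n) => /=; lia.
  exists (inr (Ordinal hj)); first by rewrite mem_enum.
  move: hx hc; rewrite /=; case: (m == n) => /=; lia.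
exists (inl (Ordinal hm)); first by rewrite mem_enum.
move: hx hc; rewrite /=; case: (m == n) => /=; lia.
Qed.

Lemma SL_f0 : SL f0 = (\sum_(k < m) k.+1)%:R.
Proof. by rewrite /SL natr_sum. Qed.

Lemma SR_f0 : SR f0 = (\sum_(k < n) (k.+1 + (m == n)))%:R.
Proof. by rewrite /SR natr_sum. Qed.

Lemma SLR_f0 : SL f0 != SR f0.
Proof.
rewrite SL_f0 SR_f0 eqr_nat sumc; apply/eqP => h.
have t1 := tri m; have t2 := tri n.
move: h; case: eqP => [mn|mn] /= h.
  by subst n; lia.
have lt : (m < n)%nat by lia.
have : (m * m.+1 < n * n.+1)%nat by apply: ltn_mul.
by rewrite muln0 addn0 in h; rewrite -t1 -t2 -h ltnn.
Qed.

Lemma dist_f0 : distinguishing e f0.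
Proof.
have d1 := diam1.
move=> x y hxy.
have h1 : gs f0 x 1 = gs f0 y 1.
  by rewrite -!vstring_nth ?d1 // hxy.
case: x y hxy h1 => [a|a] [b|b] hxy h1.
- case: (a =P b) => [->//|nab].
  have hm2 : leq 2 m.
    have : nat_of_ord a <> nat_of_ord b by move=> q; apply: nab; exact: val_inj.
    have := ltn_ord a; have := ltn_ord b; lia.
  have d2 := diam2L hm2.
  have : gs f0 (inl a) 2 = gs f0 (inl b) 2 by rewrite -!vstring_nth ?d2 // hxy.
  rewrite !gsL2 => /addrI/oppr_inj/eqP; rewrite /f0 eqr_nat /= eqSS => /eqP q.
  by case: nab; apply: val_inj.
- by move: h1; rewrite gsL1 gsR1 => /eqP; rewrite eq_sym (negbTE SLR_f0).
- by move: h1; rewrite gsL1 gsR1 => /eqP; rewrite (negbTE SLR_f0).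
- case: (a =P b) => [->//|nab].
  have hn2 : leq 2 n.
    have : nat_of_ord a <> nat_of_ord b by move=> q; apply: nab; exact: val_inj.
    have := ltn_ord a; have := ltn_ord b; lia.
  have d2 := diam2R hn2.
  have : gs f0 (inr a) 2 = gs f0 (inr b) 2 by rewrite -!vstring_nth ?d2 // hxy.
  rewrite !gsR2 => /addrI/oppr_inj/eqP; rewrite /f0 eqr_nat /= eqn_add2r eqSS => /eqP q.
  by case: nab; apply: val_inj.
Qed.

End K.

Theorem mainTheorem13 (m n : nat) (hm : 0 < m) (hmn : m <= n) :
  (m < n -> is_IDI (@Kmn_rel m n) n) /\
  (m = n -> is_IDI (@Kmn_rel m n) n.+1).
Proof.
have hn : (0 < n)%nat by apply: leq_trans hm hmn.
split=> [lt_mn | eq_mn].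
  split.
    exists (@f0 m n); split; first exact: (dist_f0 hm hn).
    rewrite (num_f0 hm hn hmn); move: lt_mn; case: eqP => [->|_ _]; [by rewrite ltnn | exact: addn0].
  move=> f hd; apply: num_geR; exact: (inj_R hm hn hd).
split.
  exists (@f0 m n); split; first exact: (dist_f0 hm hn).
  rewrite (num_f0 hm hn hmn); case: eqP => // _; exact: addn1.
move=> f hd; exact: (lower_eq hm hn eq_mn hd).
Qed.
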